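(* Let $A=(Q,q_0,\Sigma,\delta,\alpha)$ with $Q_d$ be an LDBA, $\mathsf{Ord}$ an ordering of its states w.r.t. $Q_d$, and $w\in\Sigma^\omega$. The color summary of the run DAG $G_w$ is even if and only if $G_w$ contains an accepting run (equivalently, iff $w\in\mathsf L(A)$).
   Context: A (transition-based) nondeterministic Büchi automaton is $A=(Q,q_0,\Sigma,\delta,\alpha)$ with finite $Q$, $q_0\in Q$, finite alphabet $\Sigma$, total $\delta\subseteq Q\times\Sigma\times Q$, and accepting transitions $\alpha\subseteq\delta$. A run on $w\in\Sigma^\omega$ is $\rho:\mathbb N\to Q$ with $\rho(0)=q_0$, $(\rho(i),w(i),\rho(i+1))\in\delta$; it is accepting if $(\rho(i),w(i),\rho(i+1))\in\alpha$ for infinitely many $i$; $\mathsf L(A)$ is the set of words with an accepting run. An LDBA additionally has $Q_d\subseteq Q$ with (1) $\alpha\subseteq Q_d\times\Sigma\times Q_d$; (2) each $q\in Q_d$ has exactly one $\sigma$-successor $\delta(q,\sigma)$ for each $\sigma$; (3) successors of states in $Q_d$ are in $Q_d$. Assume $q_0\notin Q_d$. Run DAG $G_w=(V,E)$: $V_0=\{(q_0,0)\}$, $V_i=\{(q,i)\mid\exists(q',i-1)\in V_{i-1}:(q',w(i-1),q)\in\delta\}$, $E=\{((q,i),(q',i+1))\in V_i\times V_{i+1}\mid (q,w(i),q')\in\delta\}$, $V^d_i=V_i\cap(Q_d\times\{i\})$. Runs are paths from $(q_0,0)$; a run $v_0v_1\dots$ with $v_i=(q_i,i)$ is accepting if $(q_i,w(i),q_{i+1})\in\alpha$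 for infinitely many $i$. An ordering w.r.t. $Q_d$ is $\mathsf{Ord}:Q\to\{1,\dots,|Q_d|,+\infty\}$ with value $+\infty$ exactly on $Q\setminus Q_d$ and injective on $Q_d$; $\mathsf{Ord}((q,i))=\mathsf{Ord}(q)$. For run prefixes of equal length $n+1$, $\rho(0..n)\sqsubseteq\rho'(0..n)$ iff their $\mathsf{Ord}$-sequences are equal or lexicographically smaller (first differing position $i$ has $\mathsf{Ord}(\rho(i))<\mathsf{Ord}(\rho'(i))$, with $+\infty$ above all integers). For distinct $v,v'\in V_i$, $v\sqsubset_i v'$ iff some run prefix ending in $v$ is $\sqsubseteq$-smaller than all run prefixes ending in $v'$; this is a total order on $V^d_i$. $\mathsf{Ind}_i(v)\in\{1,\dots,|Q_d|\}$ is the position of $v\in V^d_i$ in this order (the smallest has index 1). $\mathsf{Dec}(V^d_i)$ is the set of $v\in V^d_i$ whose (unique) successor $v'\in V^d_{i+1}$ satisfies $\mathsf{Ind}_{i+1}(v')<\mathsf{Ind}_i(v)$. $\mathsf{Acc}(V^d_i)$ is the set of $v=(q,i)\in V^d_i$ having an edge to some $(q',i+1)\in V^d_{i+1}$ with $(q,w(i),q')\in\alpha$. The color of the step from level $i$ to $i+1$ is: if $\mathsf{Dec}=\emptyset$ and $\mathsf{Acc}\neq\emptyset$: $2\min_{v\in\mathsf{Acc}(V^d_i)}\mathsf{Ind}_i(v)$; if $\mathsf{Dec}\ne\emptyset$ and $\mathsf{Acc}=\emptyset$: $2\min_{v\in\mathsf{Dec}(V^d_i)}\mathsf{Ind}_i(v)-1$;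 if both nonempty: the minimum of these two values; if both empty: $2|Q_d|+1$. The color summary of $G_w$ is the minimal color occurring infinitely often in this sequence of colors. *)

(* Defs.v *)
From HB Require Import structures.
From mathcomp Require Import all_boot.
Set Implicit Arguments. Unset Strict Implicit. Unset Printing Implicit Defensive.

Section LDBA.
Variables (Q Sigma : finType) (q0 : Q) (delta alpha : Q -> Sigma -> Q -> bool)
  (Qd : {set Q}).

Definition is_LDBA : Prop :=
  (forall q s, exists q', delta q s q') /\
  (forall q s q', alpha q s q' -> delta q s q') /\
  (forall q s q', alpha q s q' -> (q \in Qd) && (q' \in Qd)) /\
  (forall q s, q \in Qd -> exists! q', delta q s q') /\
  (forall q s q', q \in Qd -> delta q s q' -> q' \in Qd) /\
  q0 \notin Qd.

(* Ord : Q -> {1..|Qd|, +oo}; None encodes +oo. *)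
Definition is_ordering (Ord : Q -> option nat) : Prop :=
  [/\ (forall q, (Ord q == None) = (q \notin Qd)),
      (forall q, q \in Qd -> exists k, Ord q = Some k /\ 1 <= k <= #|Qd|)
    & {in Qd &, injective Ord}].

Definition olt (x y : option nat) : bool :=
  match x, y with
  | Some a, Some b => a < b
  | Some _, None => true
  | _, _ => false
  end.

Fixpoint lexle (s t : seq (option nat)) : bool :=
  match s, t with
  | [::], _ => true
  | x :: s', y :: t' => olt x y || ((x == y) && lexle s' t')
  | _ :: _, [::] => false
  end.

Variables (Ord : Q -> option nat) (w : nat -> Sigma).

Fixpoint V (i : nat) : {set Q} :=
  match i with
  | 0 => [set q0]
  | i'.+1 => [set q | [exists q' in V i', delta q' (w i') q]]
  end.

Definition Vd (i : nat) : {set Q} := V i :&: Qd.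

Definition prefix_to (n : nat) (p : n.+1.-tuple Q) (q : Q) : bool :=
  [&& nth q0 p 0 == q0,
      [forall j : 'I_n, delta (nth q0 p j) (w j) (nth q0 p j.+1)]
    & nth q0 p n == q].

Definition prec (n : nat) (v v' : Q) : bool :=
  (v != v') &&
  [exists p : n.+1.-tuple Q, prefix_to p v &&
     [forall p' : n.+1.-tuple Q,
        prefix_to p' v' ==> lexle (map Ord p) (map Ord p')]].

Definition Ind (n : nat) (v : Q) : nat :=
  #|[set u in Vd n | prec n u v]|.+1.

Definition Dec (i : nat) : {set Q} :=
  [set q in Vd i | [exists q' in Vd i.+1,
      delta q (w i) q' && (Ind i.+1 q' < Ind i q)]].

Definition Acc (i : nat) : {set Q} :=
  [set q in Vd i | [exists q' in Vd i.+1,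
      delta q (w i) q' && alpha q (w i) q']].

Definition minInd (i : nat) (S : {set Q}) : nat :=
  \big[minn/#|Qd|.+1]_(q in S) Ind i q.

Definition color (i : nat) : nat :=
  let cA := 2 * minInd i (Acc i) in
  let cD := (2 * minInd i (Dec i)) - 1 in
  if Dec i == set0 then
    (if Acc i == set0 then 2 * #|Qd| + 1 else cA)
  else
    (if Acc i == set0 then cD else minn cA cD).

Definition inf_often (c : nat) : Prop :=
  forall N, exists i, N <= i /\ color i = c.

Definition is_color_summary (c : nat) : Prop :=
  inf_often c /\ forall c', inf_often c' -> c <= c'.

Definition has_accepting_run : Prop :=
  exists rho : nat -> Q,
    [/\ rho 0 = q0,
        (forall i, delta (rho i) (w i) (rho i.+1))
      & (forall N, exists i, N <= i /\ alpha (rho i) (w i) (rho i.+1))].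

End LDBA.

(* Main.v *)
Require Import Defs.
From mathcomp Require Import all_boot.
From mathcomp Require Import zify.
From Stdlib Require Import Classical.
Set Implicit Arguments. Unset Strict Implicit. Unset Printing Implicit Defensive.

Lemma olt_irr x : olt x x = false.
Proof. by case: x => //= n; rewrite ltnn. Qed.

Lemma olt_trans x y z : olt x y -> olt y z -> olt x z.
Proof. by case: x; case: y; case: z => //= a b c; apply: ltn_trans. Qed.

Lemma olt_total x y : [|| olt x y, olt y x | x == y].
Proof.
case: x; case: y => //= a b.
by case: (ltngtP b a) => //= ->; rewrite ?orbT.
Qed.

Lemma olt_asym x y : olt x y -> olt y x = false.
Proof. move=> h; apply/negP=> h'; have := olt_trans h h'; by rewrite olt_irr. Qed.

Lemma lexle_refl s : lexle s s.
Proof. by elim: s => //= x s ->; rewrite eqxx orbT. Qed.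

Lemma lexle_trans s t u : lexle s t -> lexle t u -> lexle s u.
Proof.
elim: s t u => [//|x s IH] [|y t] [|z u] //=.
case/orP=> [hxy|/andP[/eqP <- hst]]; case/orP=> [hyz|/andP[/eqP <- htu]].
- by rewrite (olt_trans hxy hyz).
- by rewrite hxy.
- by rewrite hyz.
- by rewrite eqxx (IH _ _ hst htu) orbT.
Qed.

Lemma lexle_total s t : lexle s t || lexle t s.
Proof.
elim: s t => [//|x s IH] [|y t] //=.
case/or3P: (olt_total x y) => [->//|->|/eqP->]; first by rewrite orbT.
by rewrite olt_irr eqxx /=.
Qed.

Lemma lexle_anti s t : lexle s t -> lexle t s -> s = t.
Proof.
elim: s t => [|x s IH] [|y t] //=.
case/orP=> [hxy|/andP[/eqP <- hst]].
  rewrite (olt_asym hxy) /= => /andP[/eqP e _].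
  by rewrite e olt_irr in hxy.
by rewrite olt_irr eqxx /= => /(IH _ hst) ->.
Qed.

Lemma lexle_rcons s t x y : size s = size t ->
  lexle (rcons s x) (rcons t y) = lexle s t && ((s == t) ==> lexle [:: x] [:: y]).
Proof.
elim: s t => [|a s IH] [|b t] //=.
case=> /IH ->; rewrite eqseq_cons.
case h: (olt a b) => /=.
  by case: eqP h => // ->; rewrite olt_irr.
by case: (a == b) => //=; rewrite ?andbF.
Qed.

Lemma lexle_top s : lexle s (nseq (size s) None).
Proof.
elim: s => //= x s IH; case: x => [n|] //=; by rewrite eqxx IH orbT.
Qed.


Section Inf.
Variable f : nat -> nat.
Definition info c := forall N, exists i, N <= i /\ f i = c.

Lemma not_info c : ~ info c -> exists N, forall i, N <= i -> f i <> c.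
Proof.
move=> hn; apply: NNPP => hn2; apply: hn => N; apply: NNPP => hn3; apply: hn2.
exists N => i hi e; apply: hn3; by exists i.
Qed.

Lemma pigeon B : (forall N, exists i, N <= i /\ f i <= B) -> exists2 c, c <= B & info c.
Proof.
elim: B => [|B IH] H.
  exists 0 => // N; case: (H N) => i [hi hf]; exists i; split => //; by apply/eqP; rewrite -leqn0.
case: (classic (info B.+1)) => hB; first by exists B.+1.
case: (not_info hB) => N0 hN0.
case: IH => [N|c hc hi]; last by exists c => //; apply: leqW.
case: (H (maxn N N0)) => i [hi hf]; exists i; split; first by move: hi; rewrite geq_max => /andP [].
have := hN0 i; move: hi; rewrite geq_max => /andP [_ h] /(_ h) hne; lia.
Qed.

Lemma summary_ex c : info c -> exists c', info c' /\ (forall c'', info c'' -> c' <= c'').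
Proof.
elim/ltn_ind: c => c IH hc.
case: (classic (exists2 c', c' < c & info c')) => [[c' h1 h2]|hn]; first exact: IH c' h1 h2.
exists c; split => // c'' h; rewrite leqNgt; apply/negP => hlt; apply: hn; by exists c''.
Qed.

Lemma eventually_ge c : (forall c', c' < c -> ~ info c') -> exists N, forall i, N <= i -> c <= f i.
Proof.
elim: c => [|c IH] H; first by exists 0.
case: IH => [c' hc'|N1 hN1]; first by apply: H; apply: leqW.
case: (not_info (H c (ltnSn c))) => N2 hN2.
exists (maxn N1 N2) => i; rewrite geq_max => /andP [h1 h2].
have := hN1 _ h1; have := hN2 _ h2; lia.
Qed.

Lemma mono_le M : (forall i, M <= i -> f i.+1 <= f i) -> forall i, M <= i -> f i <= f M.
Proof.
move=> H i hi; rewrite -(subnKC hi); elim: (i - M) => [|d IH]; first by rewrite addn0.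
rewrite addnS; exact: leq_trans (H _ (leq_addr _ _)) IH.
Qed.

Lemma stabilize M : (forall i, M <= i -> f i.+1 <= f i) ->
  exists N, M <= N /\ forall i, N <= i -> f i = f N.
Proof.
move=> H; suff : forall n M, f M <= n -> (forall i, M <= i -> f i.+1 <= f i) ->
  exists N, M <= N /\ forall i, N <= i -> f i = f N by move/(_ (f M) M (leqnn _) H).
elim=> [|n IH] {H}M hM H.
  exists M; split => // i hi; have := mono_le H hi; lia.
case: (classic (forall i, M <= i -> f i = f M)) => hall; first by exists M.
have [i [hi hne]] : exists i, M <= i /\ f i <> f M.
  apply: NNPP => hn; apply: hall => i hi; apply: NNPP => hn2; apply: hn; by exists i.
have hle := mono_le H hi.
case: (IH i) => [|j hj|N [hN1 hN2]]; first by lia.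
  by apply: H; apply: leq_trans hi hj.
exists N; split => //; exact: leq_trans hi hN1.
Qed.
End Inf.

Section Main.
Variables (Q Sigma : finType) (q0 : Q) (delta alpha : Q -> Sigma -> Q -> bool)
  (Qd : {set Q}) (Ord : Q -> option nat) (w : nat -> Sigma).
Hypothesis HA : is_LDBA q0 delta alpha Qd.
Hypothesis HO : is_ordering Qd Ord.

Local Notation VV := (V q0 delta w).
Local Notation VVd := (Vd q0 delta Qd w).
Local Notation pref := (prefix_to q0 delta w).
Local Notation precn := (prec q0 delta Ord w).
Local Notation IndN := (Ind q0 delta Qd Ord w).

Definition P n v (t : seq (option nat)) : Prop :=
  exists p : n.+1.-tuple Q, pref p v /\ t = map Ord p.

Lemma P0 v t : P 0 v t -> v = q0 /\ t = [:: Ord q0].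
Proof.
case=> p [/and3P [h0 _ /eqP hl] ->].
case: p h0 hl => [[|x [|y s]]] //= _ /eqP -> ->; done.
Qed.

Lemma P0' : P 0 q0 [:: Ord q0].
Proof.
have h : size [:: q0] == 1 by [].
exists (Tuple h); split => //; apply/and3P; split => //; by apply/forallP => -[].
Qed.

Lemma PS n v' t : P n.+1 v' t <->
  exists v t0, [/\ P n v t0, delta v (w n) v' & t = rcons t0 (Ord v')].
Proof.
split.
- case=> p [/and3P [h0 /forallP hd /eqP hl] ->].
  case: p h0 hd hl => s /= /eqP Hs h0 hd hl.
  case/lastP: s Hs h0 hd hl => [|s x] //; rewrite size_rcons => -[Hs] h0 hd hl.
  rewrite nth_rcons Hs ltnn eqxx in hl.
  exists (nth q0 s n), (map Ord s).
  have Hs' : size s == n.+1 by rewrite Hs.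
  split.
  + exists (Tuple Hs'); split => //=. apply/and3P; split => //.
    * by rewrite nth_rcons Hs in h0.
    * apply/forallP => j; have := hd (widen_ord (leqnSn _) j).
      by rewrite /= !nth_rcons Hs !ltnS (ltn_ord j) (ltnW (ltn_ord j)).
  + have := hd ord_max; by rewrite /= !nth_rcons Hs ltnSn ltnn eqxx hl.
  + by rewrite map_rcons hl.
- case=> v [t0 [[p [hp ->]] hd ->]].
  exists (rcons_tuple p v'); split; last by rewrite /= map_rcons.
  case/and3P: hp => h0 /forallP hf /eqP hl. apply/and3P; split.
  + by rewrite /= nth_rcons size_tuple.
  + apply/forallP => j; rewrite /= !nth_rcons size_tuple.
    case: (ltnP j n) => hj.
    * have := hf (Ordinal hj); by rewrite /= ltnS (ltnW hj) ltnS hj.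
    * have ej : nat_of_ord j = n by apply/eqP; rewrite eqn_leq hj -ltnS ltn_ord.
      by rewrite ej ltnSn ltnn eqxx hl.
  + by rewrite /= nth_rcons size_tuple ltnn eqxx.
Qed.


Lemma HA_alpha q s q' : alpha q s q' -> (q \in Qd) && (q' \in Qd).
Proof. by case: HA => _ [_ [h _]]; apply: h. Qed.
Lemma HA_clos q s q' : q \in Qd -> delta q s q' -> q' \in Qd.
Proof. by case: HA => _ [_ [_ [_ [h _]]]]; apply: h. Qed.
Lemma HA_asub q s q' : alpha q s q' -> delta q s q'.
Proof. by case: HA => _ [h _]; apply: h. Qed.
Lemma HA_q0 : q0 \notin Qd.
Proof. by case: HA => _ [_ [_ [_ [_ h]]]]. Qed.

Definition succ n q := odflt q [pick q' | delta q (w n) q'].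

Lemma succP n q : q \in Qd ->
  delta q (w n) (succ n q) /\ forall q', delta q (w n) q' -> q' = succ n q.
Proof.
move=> hq; case: HA => _ [_ [_ [hd _]]].
case: (hd q (w n) hq) => x [hx hu].
rewrite /succ; case: pickP => [y hy|/(_ x)]; last by rewrite hx.
split=> // q' hq'; by rewrite -(hu _ hq') (hu _ hy).
Qed.

Lemma Ord_None q : (Ord q == None) = (q \notin Qd).
Proof. by case: HO => h _ _; apply: h. Qed.

Lemma Ord_inj : {in Qd &, injective Ord}.
Proof. by case: HO. Qed.

Lemma P_size n v t : P n v t -> size t = n.+1.
Proof. by case=> p [_ ->]; rewrite size_map size_tuple. Qed.

Lemma P_last n v t : P n v t -> last None t = Ord v.
Proof.
elim: n v t => [|n IH] v t.
  by case/P0 => -> ->.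
by case/PS => x [t0 [_ _ ->]]; rewrite last_rcons.
Qed.

Lemma inVS n v x : x \in VV n -> delta x (w n) v -> v \in VV n.+1.
Proof. move=> hx hd; rewrite /= inE; apply/existsP; exists x; by rewrite hx. Qed.

Lemma P_V n v t : P n v t -> v \in VV n.
Proof.
elim: n v t => [|n IH] v t.
  by case/P0 => -> _; rewrite /= inE.
case/PS => x [t0 [hx hd _]]; exact: inVS (IH _ _ hx) hd.
Qed.

Lemma V_P n v : v \in VV n -> exists t, P n v t.
Proof.
elim: n v => [|n IH] v.
  by rewrite /= inE => /eqP ->; exists [:: Ord q0]; apply: P0'.
rewrite /= inE => /existsP [x /andP [hx hd]].
case: (IH _ hx) => t0 ht0; exists (rcons t0 (Ord v)); apply/PS.
by exists x, t0.
Qed.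

Lemma rcons_nseq m (x : option nat) : rcons (nseq m x) x = nseq m.+1 x.
Proof. by elim: m => //= m ->. Qed.

Lemma P_nQd n v t : P n v t -> v \notin Qd -> t = nseq n.+1 None.
Proof.
elim: n v t => [|n IH] v t.
  by case/P0 => -> -> hq; move: hq; rewrite -Ord_None => /eqP ->.
case/PS => x [t0 [hx hd ->]] hv.
have hxn : x \notin Qd by apply/negP => hxq; move: hv; rewrite (HA_clos hxq hd).
rewrite (IH _ _ hx hxn); move: hv; rewrite -Ord_None => /eqP ->.
by rewrite rcons_nseq.
Qed.

Lemma last_neq n x z s t : P n x s -> P n z t -> x \in Qd -> x != z -> s != t.
Proof.
move=> hs ht hx hxz; apply/eqP => est.
have e : Ord x = Ord z by rewrite -(P_last hs) -(P_last ht) est.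
case hz : (z \in Qd).
  by move: hxz; rewrite (Ord_inj hx hz e) eqxx.
move: e; have := Ord_None x; rewrite hx => /negbT hxN.
have := Ord_None z; rewrite hz /= => /eqP ->.
by move/eqP; rewrite (negbTE hxN).
Qed.

Lemma seq_min (A : seq (seq (option nat))) : A != [::] ->
  exists2 s, s \in A & forall t, t \in A -> lexle s t.
Proof.
elim: A => [//|a A IH] _.
case: A IH => [|b A] IH.
  by exists a => [|t]; rewrite ?inE // => /eqP ->; apply: lexle_refl.
case: IH => // s hs hm.
case/orP: (lexle_total a s) => has.
  exists a; first by rewrite inE eqxx.
  move=> t; rewrite inE => /orP [/eqP ->|ht]; first exact: lexle_refl.
  exact: lexle_trans has (hm _ ht).
exists s; first by rewrite inE hs orbT.
move=> t; rewrite inE => /orP [/eqP ->|ht] //; exact: hm.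
Qed.

Definition ismin n v s := P n v s /\ forall t, P n v t -> lexle s t.

Lemma Pmin n v : v \in VV n -> exists s, ismin n v s.
Proof.
move=> hv.
pose A := [seq map Ord (val p) | p <- enum [pred p : n.+1.-tuple Q | pref p v]].
have PA t : P n v t -> t \in A.
  case=> p [hp ->]; apply/mapP; exists p => //; by rewrite mem_filter mem_index_enum andbT.
have AP t : t \in A -> P n v t.
  case/mapP => p; rewrite mem_filter mem_index_enum andbT => hp ->; by exists p.
case: (V_P hv) => t0 ht0.
have : A != [::] by apply/eqP => eA; move: (PA _ ht0); rewrite eA.
case/seq_min => s hs hm; exists s; split; first exact: AP.
move=> t /PA; exact: hm.
Qed.

Lemma prec_intro n u v s : u != v -> P n u s ->
  (forall t, P n v t -> lexle s t) -> precn n u v.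
Proof.
move=> huv [p [hp ->]] hm; rewrite /prec huv /=; apply/existsP; exists p.
rewrite hp /=; apply/forallP => p'; apply/implyP => hp'; apply: hm; by exists p'.
Qed.

Lemma prec_elim n u v : precn n u v ->
  u != v /\ exists s, P n u s /\ forall t, P n v t -> lexle s t.
Proof.
case/andP => huv /existsP [p /andP [hp /forallP hf]]; split => //.
exists (map Ord p); split; first by exists p.
move=> t [p' [hp' ->]]; exact: (implyP (hf p') hp').
Qed.

Lemma precE n u v su sv : ismin n u su -> ismin n v sv ->
  precn n u v = (u != v) && lexle su sv.
Proof.
move=> [hu mu] [hv mv]; apply/idP/idP.
  case/prec_elim => -> [s [hs hm]] /=; exact: lexle_trans (mu _ hs) (hm _ hv).
case/andP => huv hl; apply: prec_intro huv hu _ => t ht; exact: lexle_trans hl (mv _ ht).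
Qed.


Lemma VdE n x : (x \in VVd n) = (x \in VV n) && (x \in Qd).
Proof. by rewrite /Vd inE. Qed.

Lemma Vd_min n v : v \in VVd n -> exists s, ismin n v s.
Proof. by rewrite VdE => /andP [hv _]; apply: Pmin. Qed.

Lemma Vd_Qd n v : v \in VVd n -> v \in Qd.
Proof. by rewrite VdE => /andP []. Qed.

Lemma prec_total n u v : u \in VVd n -> v \in VVd n -> u != v ->
  precn n u v || precn n v u.
Proof.
move=> hu hv huv; case: (Vd_min hu) => su mu; case: (Vd_min hv) => sv mv.
by rewrite (precE mu mv) (precE mv mu) huv eq_sym huv /= lexle_total.
Qed.

Lemma prec_asym n u v : u \in VVd n -> v \in VVd n -> precn n u v -> ~~ precn n v u.
Proof.
move=> hu hv; case: (Vd_min hu) => su mu; case: (Vd_min hv) => sv mv.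
rewrite (precE mu mv) (precE mv mu) => /andP [huv h1]; apply/negP => /andP [_ h2].
have e := lexle_anti h1 h2.
by move: (last_neq mu.1 mv.1 (Vd_Qd hu) huv); rewrite e eqxx.
Qed.

Lemma prec_irr n u : precn n u u = false.
Proof. by rewrite /prec eqxx. Qed.

Lemma prec_trans n x u z : x \in VVd n -> u \in VVd n -> z \in VVd n ->
  precn n x u -> precn n u z -> precn n x z.
Proof.
move=> hx hu hz hxu huz.
case: (eqVneq x z) => [exz|hxz].
  by move: (prec_asym hu hz huz); rewrite -exz hxu.
case: (Vd_min hx) => sx mx; case: (Vd_min hu) => su mu; case: (Vd_min hz) => sz mz.
move: hxu huz; rewrite (precE mx mu) (precE mu mz) (precE mx mz) hxz /=.
by case/andP => _ h1 /andP [_ h2]; apply: lexle_trans h1 h2.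
Qed.

Definition S n v := [set x in VVd n | (x == v) || precn n x v].

Lemma SE n v x : (x \in S n v) = (x \in VVd n) && ((x == v) || precn n x v).
Proof. by rewrite /S in_set. Qed.

Lemma IndE n v : v \in VVd n -> IndN n v = #|S n v|.
Proof.
move=> hv; rewrite /Ind.
have -> : S n v = v |: [set u in VVd n | precn n u v].
  apply/setP => x; rewrite !inE; case: (eqVneq x v) => [->|] //=.
  by rewrite -VdE hv.
by rewrite cardsU1 inE prec_irr andbF.
Qed.

Lemma S_in n v x : x \in S n v -> x \in VVd n.
Proof. by rewrite SE => /andP []. Qed.

Lemma S_self n v : v \in VVd n -> v \in S n v.
Proof. by move=> hv; rewrite SE hv eqxx. Qed.

Lemma S_sub n v u : v \in VVd n -> u \in S n v -> S n u \subset S n v.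
Proof.
move=> hv hu; apply/subsetP => x hx; have hxd := S_in hx; have hud := S_in hu.
rewrite SE hxd /=; move: hx hu; rewrite !SE hxd hud /=.
case/orP => [/eqP ->|hxu] //; case/orP => [/eqP <-|huv]; first by rewrite hxu orbT.
by rewrite (prec_trans hxd hud hv hxu huv) orbT.
Qed.

Lemma prec_Ind n u v : u \in VVd n -> v \in VVd n -> precn n u v -> IndN n u < IndN n v.
Proof.
move=> hu hv huv; rewrite (IndE hu) (IndE hv); apply: proper_card; apply/properP; split.
  by apply: S_sub => //; rewrite SE hu huv orbT.
exists v; first exact: S_self.
rewrite SE hv /= negb_or (negbTE (prec_asym hu hv huv)) andbT.
by case/andP: huv => h _; rewrite eq_sym.
Qed.

Lemma Ind_le_S n u v : u \in VVd n -> v \in VVd n -> IndN n u <= IndN n v -> u \in S n v.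
Proof.
move=> hu hv hle; rewrite SE hu /=; case: (eqVneq u v) => //= huv.
case/orP: (prec_total hu hv huv) => // hvu.
by move: (prec_Ind hv hu hvu); rewrite ltnNge hle.
Qed.

Lemma Ind_inj n u v : u \in VVd n -> v \in VVd n -> IndN n u = IndN n v -> u = v.
Proof.
move=> hu hv e; apply/eqP; apply/negP => /negP huv.
case/orP: (prec_total hu hv huv) => h; move: (prec_Ind hu hv h) || move: (prec_Ind hv hu h);
  by rewrite e ltnn.
Qed.


Lemma succ_Vd n q : q \in VVd n -> succ n q \in VVd n.+1.
Proof.
move=> hq; move: (hq); rewrite VdE => /andP [hv hQ].
case: (succP n hQ) => hd _.
by rewrite VdE (inVS hv hd) (HA_clos hQ hd).
Qed.

Lemma KL1 n v : v \in VVd n -> S n.+1 (succ n v) \subset succ n @: S n v.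
Proof.
move=> hv; apply/subsetP => x'; rewrite SE => /andP [hx' /orP [/eqP ->|hp]].
  by apply: imset_f; apply: S_self.
have hvQ := Vd_Qd hv.
case: (prec_elim hp) => hne [s [hs hm]].
case/PS: hs => x [s0 [hs0 hdx es]].
case: (Vd_min hv) => mv [hmv mvm].
case: (succP n hvQ) => hdv _.
have hP : P n.+1 (succ n v) (rcons mv (Ord (succ n v))) by apply/PS; exists v, mv.
have := hm _ hP; rewrite es lexle_rcons; last by rewrite (P_size hs0) (P_size hmv).
case/andP => hle _.
have hxQ : x \in Qd.
  apply/negP => /negP hxn; have e0 := P_nQd hs0 hxn.
  have hle2 : lexle mv s0 by rewrite e0 -(P_size hmv) lexle_top.
  have e := lexle_anti hle hle2.
  have hvx : v != x by apply/eqP => evx; move: hxn; rewrite -evx hvQ.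
  by move: (last_neq hmv hs0 hvQ hvx); rewrite e eqxx.
have hxd : x \in VVd n by rewrite VdE (P_V hs0) hxQ.
case: (succP n hxQ) => _ hu; rewrite (hu _ hdx).
apply: imset_f; rewrite SE hxd /=; case: (eqVneq x v) => //= hxv.
apply: prec_intro hxv hs0 _ => t ht; exact: lexle_trans hle (mvm _ ht).
Qed.

Lemma KL2 n v : v \in VVd n -> IndN n.+1 (succ n v) <= IndN n v.
Proof.
move=> hv; rewrite (IndE hv) (IndE (succ_Vd hv)).
exact: leq_trans (subset_leq_card (KL1 hv)) (leq_imset_card _ _).
Qed.


Lemma KL3 n v u : v \in VVd n -> IndN n.+1 (succ n v) = IndN n v ->
  u \in VVd n -> IndN n u <= IndN n v -> IndN n u <= IndN n.+1 (succ n u).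
Proof.
move=> hv heq hu hle.
have hinj : {in S n v &, injective (succ n)}.
  apply/imset_injP; rewrite eqn_leq leq_imset_card /=.
  rewrite -(IndE hv) -heq (IndE (succ_Vd hv)); exact: subset_leq_card (KL1 hv).
have huS := Ind_le_S hu hv hle.
have hsub := S_sub hv huS.
have hinju : {in S n u &, injective (succ n)}.
  by move=> a b ha hb; apply: hinj; apply: (subsetP hsub).
rewrite (IndE hu) (IndE (succ_Vd hu)) -(card_in_imset hinju).
apply: subset_leq_card; apply/subsetP => x' /imsetP [x hx ->].
have hxd := S_in hx; have hxQ := Vd_Qd hxd; have huQ := Vd_Qd hu.
rewrite SE (succ_Vd hxd) /=.
move: hx; rewrite SE hxd /= => /orP [/eqP ->|hxu]; first by rewrite eqxx.
apply/orP; right.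
have hxv : x \in S n v by apply: (subsetP hsub); rewrite SE hxd hxu orbT.
have hne : succ n x != succ n u.
  apply/eqP => e; move: (hinj _ _ hxv huS e) => exu; by rewrite exu prec_irr in hxu.
case: (Vd_min hxd) => mx [hmx mxm].
case: (succP n hxQ) => hdx _.
apply: (prec_intro hne (s := rcons mx (Ord (succ n x)))); first by apply/PS; exists x, mx.
move=> t /PS [z [t0 [ht0 hdz ->]]].
rewrite lexle_rcons; last by rewrite (P_size ht0) (P_size hmx).
suff [h1 h2] : lexle mx t0 /\ mx != t0 by rewrite h1 (negbTE h2).
case hzQ : (z \in Qd); last first.
  have e0 := P_nQd ht0 (negbT hzQ).
  split; first by rewrite e0 -(P_size hmx) lexle_top.
  apply: (last_neq hmx ht0 hxQ); apply/eqP => exz; by rewrite -exz hxQ in hzQ.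
have hzd : z \in VVd n by rewrite VdE (P_V ht0) hzQ.
case: (succP n hzQ) => _ huz; case: (succP n huQ) => hdu _.
have ez : succ n u = succ n z by apply: huz.
have hxz : precn n x z.
  case: (eqVneq z u) => [->//|hzu].
  case/orP: (prec_total hzd hu hzu) => [hzu'|huz'].
    have hzS : z \in S n v by apply: (subsetP hsub); rewrite SE hzd hzu' orbT.
    by move: (hinj _ _ hzS huS (esym ez)) => e; rewrite e eqxx in hzu.
  exact: prec_trans hxd hu hzd hxu huz'.
case: (Vd_min hzd) => mz mzi.
move: (hxz); rewrite (precE (conj hmx mxm) mzi) => /andP [hxzn hl].
split; first exact: lexle_trans hl (mzi.2 _ ht0).
exact: last_neq hmx ht0 hxQ hxzn.
Qed.


Local Notation AccN := (Acc q0 delta alpha Qd w).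
Local Notation DecN := (Dec q0 delta Qd Ord w).
Local Notation minIndN := (minInd q0 delta Qd Ord w).
Local Notation colorN := (color q0 delta alpha Qd Ord w).

Lemma big_minn_seq (F : Q -> nat) d (r : seq Q) :
  [/\ forall x, x \in r -> \big[minn/d]_(y <- r) F y <= F x,
      \big[minn/d]_(y <- r) F y <= d &
      r != [::] -> (forall x, x \in r -> F x <= d) -> exists2 x, x \in r & \big[minn/d]_(y <- r) F y = F x].
Proof.
elim: r => [|a r [IH1 IH2 IH3]]; first by rewrite big_nil.
rewrite big_cons; split.
- move=> x; rewrite inE => /orP [/eqP ->|hx]; first exact: geq_minl.
  exact: leq_trans (geq_minr _ _) (IH1 _ hx).
- exact: leq_trans (geq_minr _ _) IH2.
- move=> _ hb; case: (leqP (F a) (\big[minn/d]_(y <- r) F y)) => h.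
    by exists a; rewrite ?inE ?eqxx.
  case: r IH1 IH2 IH3 h hb => [|b r] IH1 IH2 IH3 h hb.
    by move: h; rewrite big_nil => h; move: (hb a (mem_head _ _)); rewrite leqNgt h.
  case: IH3 => //; first by move=> y hy; apply: hb; rewrite inE hy orbT.
  move=> x hx e; exists x; first by rewrite inE hx orbT.
  by [].
Qed.

Lemma minInd_le i (A : {set Q}) x : x \in A -> minIndN i A <= IndN i x.
Proof.
rewrite /minInd -big_filter => hx; case: (big_minn_seq (IndN i) #|Qd|.+1 [seq x <- index_enum Q | x \in A]) => h _ _.
by apply: h; rewrite mem_filter mem_index_enum andbT.
Qed.

Lemma minInd_bnd i (A : {set Q}) : minIndN i A <= #|Qd|.+1.
Proof.
rewrite /minInd -big_filter; by case: (big_minn_seq (IndN i) #|Qd|.+1 [seq x <- index_enum Q | x \in A]).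
Qed.

Lemma Ind_bnd i q : q \in VVd i -> IndN i q <= #|Qd|.
Proof.
move=> hq; rewrite (IndE hq); apply: subset_leq_card; apply/subsetP => x /S_in; exact: Vd_Qd.
Qed.

Lemma minInd_ex i (A : {set Q}) : A \subset VVd i -> A != set0 -> exists2 x, x \in A & minIndN i A = IndN i x.
Proof.
rewrite /minInd -big_filter => hsub hA; case: (big_minn_seq (IndN i) #|Qd|.+1 [seq x <- index_enum Q | x \in A]) => _ _ h.
case: h.
  case: (set_0Vmem A) hA => [->|[x hx] _]; first by rewrite eqxx.
  by apply/eqP => e; have := hx; rewrite -(andbT (x \in A)) -(mem_index_enum x) -mem_filter e.
  move=> x; rewrite mem_filter mem_index_enum andbT => hx; apply: leqW; apply: Ind_bnd; exact: (subsetP hsub).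
by move=> x; rewrite mem_filter mem_index_enum andbT => hx e; exists x.
Qed.

Lemma Ind_ge1 i q : 0 < IndN i q.
Proof. by []. Qed.


Lemma AccE i q : (q \in AccN i) =
  (q \in VVd i) && [exists q' in VVd i.+1, delta q (w i) q' && alpha q (w i) q'].
Proof. by rewrite /Acc in_set. Qed.

Lemma DecE i q : (q \in DecN i) =
  (q \in VVd i) && [exists q' in VVd i.+1, delta q (w i) q' && (IndN i.+1 q' < IndN i q)].
Proof. by rewrite /Dec in_set. Qed.

Lemma Acc_elim i q : q \in AccN i -> q \in VVd i /\ alpha q (w i) (succ i q).
Proof.
rewrite AccE => /andP [hq /existsP [q' /and3P [_ hd ha]]]; split => //.
by case: (succP i (Vd_Qd hq)) => _ /(_ _ hd) <-.
Qed.

Lemma Acc_intro i q q' : q \in VVd i -> alpha q (w i) q' -> q \in AccN i.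
Proof.
move=> hq ha; rewrite AccE hq /=; apply/existsP; exists q'.
have hd := HA_asub ha; case/andP: (HA_alpha ha) => _ hq'.
by rewrite VdE (inVS (proj1 (andP (eqbLR (VdE _ _) hq))) hd) hq' hd ha.
Qed.

Lemma Dec_elim i q : q \in DecN i -> q \in VVd i /\ IndN i.+1 (succ i q) < IndN i q.
Proof.
rewrite DecE => /andP [hq /existsP [q' /and3P [_ hd hl]]]; split => //.
by case: (succP i (Vd_Qd hq)) => _ /(_ _ hd) <-.
Qed.

Lemma Dec_intro i q : q \in VVd i -> IndN i.+1 (succ i q) < IndN i q -> q \in DecN i.
Proof.
move=> hq hl; rewrite DecE hq /=; apply/existsP; exists (succ i q).
by rewrite (succ_Vd hq) hl (proj1 (succP i (Vd_Qd hq))).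
Qed.

Lemma Acc_sub i : AccN i \subset VVd i.
Proof. by apply/subsetP => q /Acc_elim []. Qed.
Lemma Dec_sub i : DecN i \subset VVd i.
Proof. by apply/subsetP => q /Dec_elim []. Qed.

Lemma C2 i q : q \in AccN i -> colorN i <= 2 * IndN i q.
Proof.
move=> hq; have hA : (AccN i == set0) = false by apply/negbTE/set0Pn; exists q.
have h := minInd_le i hq.
rewrite /color hA; case: ifP => _; first by rewrite leq_mul2l h orbT.
by apply: leq_trans (geq_minl _ _) _; rewrite leq_mul2l h orbT.
Qed.

Lemma C3 i q : q \in DecN i -> colorN i <= 2 * IndN i q - 1.
Proof.
move=> hq; have hD : (DecN i == set0) = false by apply/negbTE/set0Pn; exists q.
have h := minInd_le i hq.
rewrite /color hD; case: ifP => _.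
  by apply: leq_sub2r; rewrite leq_mul2l h orbT.
by apply: leq_trans (geq_minr _ _) _; apply: leq_sub2r; rewrite leq_mul2l h orbT.
Qed.

Lemma C4 i : odd (colorN i) -> colorN i < 2 * #|Qd| + 1 ->
  exists2 q, q \in DecN i & 2 * IndN i q <= (colorN i).+1.
Proof.
rewrite /color; case: ifP => hD.
  by case: ifP => _; [rewrite ltnn | rewrite mul2n odd_double].
move=> ho hb; case: (minInd_ex (Dec_sub i) (negbT hD)) => q hq e.
exists q => //; move: ho hb; rewrite e.
have := Ind_ge1 i q.
case: ifP => _; first by move=> *; lia.
set a := minIndN i (AccN i).
case: (leqP (2 * a) (2 * IndN i q - 1)) => _; first by rewrite mul2n odd_double.
move=> *; lia.
Qed.

Lemma C5 i : ~~ odd (colorN i) -> exists2 q, q \in AccN i & colorN i = 2 * IndN i q.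
Proof.
rewrite /color; case: ifP => hD.
  case: ifP => hA; first by rewrite addn1 /= mul2n odd_double.
  move=> _; case: (minInd_ex (Acc_sub i) (negbT hA)) => q hq e.
  by exists q; rewrite // e.
have := minInd_ex (Dec_sub i) (negbT hD); case=> qd _ ed.
have hg := Ind_ge1 i qd.
have hodd : odd (2 * minIndN i (DecN i) - 1).
  by rewrite ed; case: (IndN i qd) hg => // m _; rewrite mul2n doubleS subn1 /= odd_double.
case: ifP => hA; first by rewrite hodd.
case: (minInd_ex (Acc_sub i) (negbT hA)) => q hq e.
case: (leqP (2 * minIndN i (AccN i)) (2 * minIndN i (DecN i) - 1)) => _;
  last by rewrite hodd.
by exists q; rewrite // e.
Qed.


Fixpoint rho (i0 : nat) (p : seq Q) (i : nat) : Q :=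
  if i is j.+1 then (if j < i0 then nth q0 p j.+1 else succ j (rho i0 p j)) else q0.

Lemma dir1 : has_accepting_run q0 delta alpha w ->
  exists c, is_color_summary q0 delta alpha Qd Ord w c /\ ~~ odd c.
Proof.
case=> r [r0 rd ra].
have rV : forall i, r i \in VV i.
  elim=> [|i IH]; first by rewrite /= inE r0.
  exact: inVS IH (rd i).
case: (ra 0) => M [_ hM].
have rQ : forall i, M <= i -> r i \in Qd.
  move=> i hi; rewrite -(subnKC hi); elim: (i - M) => [|d IH].
    by rewrite addn0; case/andP: (HA_alpha hM).
  by rewrite addnS; apply: HA_clos IH (rd _).
have rVd : forall i, M <= i -> r i \in VVd i by move=> i hi; rewrite VdE rV rQ.
have rs : forall i, M <= i -> r i.+1 = succ i (r i).
  by move=> i hi; case: (succP i (rQ _ hi)) => _ /(_ _ (rd i)).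
pose f i := IndN i (r i).
have fmono : forall i, M <= i -> f i.+1 <= f i.
  by move=> i hi; rewrite /f rs //; apply: KL2; apply: rVd.
case: (stabilize fmono) => N [hMN hN].
set k := f N.
have hinf : forall N', exists i, N' <= i /\ colorN i <= 2 * k.
  move=> N'; case: (ra (maxn N' N)) => i [hi ha]; rewrite geq_max in hi.
  case/andP: hi => h1 h2; exists i; split => //.
  have hiM : M <= i by apply: leq_trans hMN h2.
  rewrite /k -(hN _ h2); apply: C2; exact: Acc_intro (rVd _ hiM) ha.
case: (pigeon hinf) => c0 hc0 hi0.
case: (summary_ex hi0) => c [hc hmin].
exists c; split; first by split.
have hcle : c <= 2 * k by apply: leq_trans (hmin _ hi0) hc0.
have hk : k <= #|Qd| by apply: Ind_bnd; apply: rVd.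
apply/negP => ho.
case: (hc N) => i [hi hci].
have hiM : M <= i by apply: leq_trans hMN hi.
case: (@C4 i); [by rewrite hci | by rewrite hci; lia | move=> q hq hqle].
case: (Dec_elim hq) => hqd hlt.
have heq : IndN i.+1 (succ i (r i)) = IndN i (r i).
  by rewrite -rs // -/(f i.+1) -/(f i) (hN _ hi) (hN _ (leqW hi)).
have hqk : IndN i q <= IndN i (r i) by rewrite -/(f i) (hN _ hi) -/k; lia.
have := KL3 (rVd _ hiM) heq hqd hqk; lia.
Qed.

Lemma dir2 : (exists c, is_color_summary q0 delta alpha Qd Ord w c /\ ~~ odd c) ->
  has_accepting_run q0 delta alpha w.
Proof.
case=> c [[hinf hmin] hev].
case: (@eventually_ge colorN c) => [c' hc' hi|N hN].
  by move: (hmin _ hi); rewrite leqNgt hc'.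
case: (hinf N) => i0 [hi0 hc0].
case: (@C5 i0); first by rewrite hc0.
move=> q hq; rewrite hc0 => hck.
set k := IndN i0 q.
case: (Acc_elim hq) => hqd _.
case: (V_P (proj1 (andP (eqbLR (VdE _ _) hqd)))) => t [p [hp _]].
case/and3P: hp => h0 /forallP hf /eqP hl.
have rpre : forall i, i <= i0 -> rho i0 p i = nth q0 p i.
  by case=> [_|j hj] /=; [rewrite (eqP h0) | rewrite hj].
have rpost : forall i, i0 <= i -> rho i0 p i \in VVd i /\ IndN i (rho i0 p i) = k.
  move=> i hi; rewrite -(subnKC hi); elim: (i - i0) => [|d [IH1 IH2]].
    by rewrite addn0 rpre // hl.
  rewrite addnS /= ltnNge leq_addr /=; split; first exact: succ_Vd.
  apply/eqP; rewrite eqn_leq -{1}IH2 KL2 //= leqNgt; apply/negP => hlt.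
  have hd : rho i0 p (i0 + d) \in DecN (i0 + d) by apply: Dec_intro IH1 _; rewrite IH2.
  have := C3 hd; rewrite IH2.
  have := hN (i0 + d); rewrite -hck; have := Ind_ge1 i0 q; rewrite -/k.
  have : N <= i0 + d by apply: leq_trans hi0 (leq_addr _ _).
  move=> h1 h2 /(_ h1); lia.
exists (rho i0 p); split => //.
- move=> i; case: (ltnP i i0) => h.
    rewrite rpre ?(ltnW h) //= h; exact: hf (Ordinal h).
  rewrite /= ltnNge h /=; case: (rpost _ h) => hv _.
  by case: (succP i (Vd_Qd hv)).
- move=> N'; case: (hinf (maxn N' i0)) => i [hi hci]; rewrite geq_max in hi.
  case/andP: hi => h1 h2; exists i; split => //.
  case: (@C5 i); first by rewrite hci.
  move=> q' hq'; rewrite hci hck => e.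
  case: (rpost _ h2) => hv hIk.
  case: (Acc_elim hq') => hq'd ha.
  have eq' : q' = rho i0 p i by apply: (Ind_inj hq'd hv); rewrite hIk; lia.
  by rewrite /= ltnNge h2 /= -eq'.
Qed.

End Main.

Theorem theorem1 (Q Sigma : finType) (q0 : Q) (delta alpha : Q -> Sigma -> Q -> bool)
  (Qd : {set Q}) (Ord : Q -> option nat) (w : nat -> Sigma) :
  is_LDBA q0 delta alpha Qd ->
  is_ordering Qd Ord ->
  ((exists c, is_color_summary q0 delta alpha Qd Ord w c /\ ~~ odd c) <->
   has_accepting_run q0 delta alpha w).
Proof.
move=> HA HO; split; [exact: dir2 HA HO | exact: dir1 HA HO].
Qed.
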